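(* Let $\mathcal H_1,\mathcal H_2$ be real Hilbert spaces and let $\mathcal M_{ij}:\mathcal H_j\to\mathcal H_i$ ($i,j=1,2$) be bounded linear operators with $\mathcal M_{ji}=\mathcal M_{ij}^*$. Consider the self-adjoint bounded operator $\mathcal M=\begin{pmatrix}\mathcal M_{11}&\mathcal M_{12}\\ \mathcal M_{21}&\mathcal M_{22}\end{pmatrix}$ on $\mathcal H_1\times\mathcal H_2$ (with inner product $\langle (x_1,y_1),(x_2,y_2)\rangle=\langle x_1,x_2\rangle+\langle y_1,y_2\rangle$). Suppose $\mathcal M_{11}\ge 0$ and $-\mathcal M_{22}\ge0$, i.e. $\langle \mathcal M_{11}x,x\rangle\ge0$ for all $x\in\mathcal H_1$ and $\langle\mathcal M_{22}y,y\rangle\le 0$ for all $y\in\mathcal H_2$. Then for every $\varepsilon>0$ the operator $$\mathcal M_\varepsilon=\begin{pmatrix}\mathcal M_{11}+\varepsilon I&\mathcal M_{12}\\ \mathcal M_{21}&\mathcal M_{22}-\varepsilon I\end{pmatrix}$$ is invertible (with bounded inverse), and $$\|\mathcal M_\varepsilon^{-1}\mathcal M\|\le 1\qquad\text{for all }\varepsilon>0.$$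
   Context: $\mathcal M_{ij}^*$ denotes the Hilbert-space adjoint; $I$ denotes the identity operator on the relevant space; $\|\cdot\|$ is the operator norm. *)

(* Defs.v *)
(* Real Hilbert spaces are not in the library:
   we model a real Hilbert space as a complete normed R-module whose norm
   comes from an inner product. *)
From HB Require Import structures.
From mathcomp Require Import all_boot all_order all_algebra.
From mathcomp Require Import all_classical all_reals all_analysis.
Set Implicit Arguments. Unset Strict Implicit. Unset Printing Implicit Defensive.
Import Order.TTheory GRing.Theory Num.Theory.
Import numFieldNormedType.Exports.
Local Open Scope ring_scope.

Definition is_inner_product (R : realType) (H : normedModType R)
    (ip : H -> H -> R) : Prop :=
  [/\ (forall x y, ip x y = ip y x),
      (forall a x y z, ip (a *: x + y) z = a * ip x z + ip y z)
    & (forall x, ip x x = `|x| ^+ 2)].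

Definition bounded_linear (R : realType) (U V : normedModType R)
    (T : U -> V) : Prop :=
  (forall a x y, T (a *: x + y) = a *: T x + T y) /\
  (exists C : R, forall x, `|T x| <= C * `|x|).

Definition pnorm (R : realType) (H1 H2 : normedModType R) (p : H1 * H2) : R :=
  Num.sqrt (`|p.1| ^+ 2 + `|p.2| ^+ 2).

Definition bounded_linear_prod (R : realType) (H1 H2 : normedModType R)
    (N : H1 * H2 -> H1 * H2) : Prop :=
  (forall (a : R) (p q : H1 * H2),
      N (a *: p.1 + q.1, a *: p.2 + q.2) =
      (a *: (N p).1 + (N q).1, a *: (N p).2 + (N q).2)) /\
  (exists C : R, forall p, pnorm (N p) <= C * pnorm p).

Definition blockop (R : realType) (H1 H2 : normedModType R)
    (A : H1 -> H1) (B : H2 -> H1) (C : H1 -> H2) (D : H2 -> H2)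
    (p : H1 * H2) : H1 * H2 :=
  (A p.1 + B p.2, C p.1 + D p.2).

(* Main.v *)
Require Import Defs.
From HB Require Import structures.
From mathcomp Require Import all_boot all_order all_algebra.
From mathcomp Require Import all_classical all_reals all_analysis.
From mathcomp Require Import ring lra.
Import Order.TTheory GRing.Theory Num.Theory.
Import numFieldNormedType.Exports.
Local Open Scope ring_scope.
Set Implicit Arguments. Unset Strict Implicit.

Lemma zid (V : zmodType) (x y p q r : V) : x - (p - r) - (y - (q - r)) = x - y - (p - q).
Proof. rewrite !opprB !addrA (addrAC x r) (addrAC (x - p) r q) addrK.
rewrite -!addrA; congr (_ + _). by rewrite addrCA [RHS]addrCA [- p - y]addrC.
Qed.

Section Lin.
Variables (R : realType) (U V : normedModType R) (T : U -> V).
Hypothesis hT : forall a x y, T (a *: x + y) = a *: T x + T y.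
Lemma lin0 : T 0 = 0.
Proof.
have := hT 1 0 0; rewrite scale1r addr0 scale1r => /(congr1 (fun v => v - T 0)).
by rewrite /= subrr addrK.
Qed.
Lemma linD x y : T (x + y) = T x + T y.
Proof. by have := hT 1 x y; rewrite !scale1r. Qed.
Lemma linZ a x : T (a *: x) = a *: T x.
Proof. by rewrite -[a *: x]addr0 hT lin0 addr0. Qed.
Lemma linN x : T (- x) = - T x.
Proof. by rewrite -scaleN1r linZ scaleN1r. Qed.
Lemma linB x y : T (x - y) = T x - T y.
Proof. by rewrite linD linN. Qed.
End Lin.

Section IP.
Variables (R : realType) (E : normedModType R) (ip : E -> E -> R).
Hypothesis hip : is_inner_product ip.
Lemma ipC x y : ip x y = ip y x. Proof. by case: hip. Qed.
Lemma ipxx x : ip x x = `|x| ^+ 2. Proof. by case: hip. Qed.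
Let ipL : forall a x y z, ip (a *: x + y) z = a * ip x z + ip y z.
Proof. by case: hip. Qed.
Lemma ip0l z : ip 0 z = 0.
Proof.
have := ipL 1 0 0 z; rewrite scale1r addr0 mul1r => /(congr1 (fun v => v - ip 0 z)).
by rewrite /= subrr addrK.
Qed.
Lemma ipDl x y z : ip (x + y) z = ip x z + ip y z.
Proof. by have := ipL 1 x y z; rewrite scale1r mul1r. Qed.
Lemma ipZl a x z : ip (a *: x) z = a * ip x z.
Proof. by rewrite -[a *: x]addr0 ipL ip0l addr0. Qed.
Lemma ipNl x z : ip (- x) z = - ip x z.
Proof. by rewrite -scaleN1r ipZl mulN1r. Qed.
Lemma ipBl x y z : ip (x - y) z = ip x z - ip y z.
Proof. by rewrite ipDl ipNl. Qed.
Lemma ipDr x y z : ip z (x + y) = ip z x + ip z y.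
Proof. by rewrite ipC ipDl !(ipC _ z). Qed.
Lemma ipZr a x z : ip z (a *: x) = a * ip z x.
Proof. by rewrite ipC ipZl (ipC x). Qed.
Lemma ipNr x z : ip z (- x) = - ip z x.
Proof. by rewrite ipC ipNl ipC. Qed.
Lemma ipBr x y z : ip z (x - y) = ip z x - ip z y.
Proof. by rewrite ipDr ipNr. Qed.

Lemma ip_expand x y t :
  `|x - t *: y| ^+ 2 = `|x| ^+ 2 - 2 * t * ip y x + t ^+ 2 * `|y| ^+ 2.
Proof.
rewrite -!ipxx ipBl !ipBr !ipZl !ipZr (ipC x y); ring.
Qed.

Lemma young z u c : 2 * c * ip z u <= `|z| ^+ 2 + c ^+ 2 * `|u| ^+ 2.
Proof.
have h2 : 0 <= `|z - c *: u| ^+ 2 by rewrite sqr_ge0.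
rewrite ip_expand (ipC u z) in h2.
lra.
Qed.

Lemma coer_bound z u c : 0 < c -> c * `|u| ^+ 2 <= ip z u -> c * `|u| <= `|z|.
Proof.
move=> c0 h; have y := young z u c.
have h1 : (c * `|u|) ^+ 2 <= `|z| ^+ 2 by nra.
have nu := normr_ge0 u; have nz := normr_ge0 z.
nra.
Qed.
End IP.

Lemma bl_bound (R : realType) (U V : normedModType R) (T : U -> V) :
  bounded_linear T -> exists C : R, 0 <= C /\ forall x, `|T x| <= C * `|x|.
Proof.
case=> _ [C hC]; exists `|C|; split => // x.
apply: le_trans (hC x) _; apply: ler_wpM2r => //; exact: ler_norm.
Qed.

Section Core.
Variables (R : realType) (E : completeNormedModType R) (ip : E -> E -> R).
Hypothesis hip : is_inner_product ip.
Variables (A : E -> E) (hAl : forall a x y, A (a *: x + y) = a *: A x + A y) (C0 : R).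
Hypotheses (C0ge : 0 <= C0) (hC0 : forall x, `|A x| <= C0 * `|x|).
Variable (c : R).
Hypothesis c0 : 0 < c.
Hypothesis hco : forall x, c * `|x| ^+ 2 <= ip (A x) x.


Lemma coer_inj x y : A x = A y -> x = y.
Proof.
move=> e; apply/eqP; rewrite -subr_eq0 -normr_eq0; apply/eqP.
have := hco (x - y); rewrite (linB hAl) e subrr (ip0l hip).
move=> h; have s0 := sqr_ge0 `|x - y|; have n0 := normr_ge0 (x - y).
have h2 : `|x - y| ^+ 2 <= 0 by rewrite -(pmulr_rle0 _ c0).
apply/eqP; rewrite -sqrf_eq0 eq_le h2 s0 //.
Qed.

Lemma coer_surj b : exists x, A x = b.
Proof.
have c0' := c0; have C0ge' := C0ge.
set L := C0 + c.
have L0 : 0 < L by rewrite /L; lra.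
set u := c / L.
have u0 : 0 < u by rewrite /u divr_gt0.
have u1 : u <= 1 by rewrite /u ler_pdivrMr // mul1r /L; lra.
set t := u / L.
have tc : t * c = u ^+ 2 by rewrite /t /u; field; lra.
have tL : t * L = u by rewrite /t; field; lra.
have t0 : 0 < t by rewrite /t divr_gt0.
set k := 1 - u ^+ 2 / 2.
have k0 : 0 <= k by rewrite /k; nra.
have k1 : k < 1 by rewrite /k; nra.
pose f := fun x => x - t *: (A x - b).
have key x y : `|f x - f y| <= k * `|x - y|.
  have -> : f x - f y = (x - y) - t *: A (x - y).
    by rewrite (linB hAl) /f !scalerBr zid.
  set d := x - y.
  have e := ip_expand hip d (A d) t.
  have h1 := hco d.
  have h2 : `|A d| <= L * `|d|.
    apply: le_trans (hC0 d) _; apply: ler_wpM2r => //; rewrite /L; lra.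
  have h3 : `|A d| ^+ 2 <= L ^+ 2 * `|d| ^+ 2.
    rewrite -exprMn ler_sqr ?nnegrE ?(mulr_ge0 (ltW L0)) //.
  have h4 : `|d - t *: A d| ^+ 2 <= (1 - u ^+ 2) * `|d| ^+ 2.
    rewrite e.
    have : t * (c * `|d| ^+ 2) <= t * ip (A d) d by rewrite ler_pM2l.
    have : t ^+ 2 * `|A d| ^+ 2 <= t ^+ 2 * (L ^+ 2 * `|d| ^+ 2).
      by rewrite ler_pM2l // exprn_gt0.
    have -> : t ^+ 2 * (L ^+ 2 * `|d| ^+ 2) = u ^+ 2 * `|d| ^+ 2.
      by rewrite mulrA -exprMn tL.
    rewrite mulrA tc (ipC hip (A d) d).
    lra.
  have h5 : (1 - u ^+ 2) * `|d| ^+ 2 <= (k * `|d|) ^+ 2.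
    have hk : 1 - u ^+ 2 <= k ^+ 2 by rewrite /k; nra.
    rewrite [(k * _) ^+ 2]exprMn; have s0 := sqr_ge0 `|d|; move: (`|d| ^+ 2) s0 => s s0.
    exact: (ler_wpM2r s0 hk).
  rewrite -ler_sqr ?nnegrE ?mulr_ge0 //; exact: le_trans h4 h5.
pose F := (totalfun_ setT f : {fun [set: E] >-> [set: E]}).
have ctr : is_contraction F.
  exists (NngNum k0); split => //= z _; exact: key.
have [p _ pe] := banach_fixed_point ctr (@closedT _) (ex_intro _ 0 I).
exists p; move: pe; rewrite /= /totalfun_ /f => /(congr1 (fun v => p - v)).
rewrite subrr opprB addrC addrNK => /esym /eqP.
rewrite scaler_eq0 (gt_eqF t0) /= subr_eq0 => /eqP //.
Qed.

Lemma coer_inverse : exists B : E -> E, bounded_linear B /\ forall b, A (B b) = b.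
Proof.
pose B := fun b => projT1 (cid (coer_surj b)).
have AB b : A (B b) = b by rewrite /B; case: cid.
exists B; split => //; split.
  move=> a x y; apply: coer_inj.
  by rewrite hAl AB AB AB.
exists c^-1 => x.
have h := coer_bound hip c0 (hco (B x)); rewrite AB in h.
by rewrite -(ler_pM2l c0) mulrA mulfV ?gt_eqF // mul1r.
Qed.
End Core.

Lemma zid3 (V : zmodType) (a b c d : V) : (a - b) + (c - d) = (a + c) - (b + d).
Proof. by rewrite addrACA opprD. Qed.
Lemma zid2 (V : zmodType) (a b c e : V) : a + e + b = c -> c - (a + b) = e.
Proof. by move=> <-; rewrite opprD addrA (addrAC _ (- a)) addrK (addrAC a e) subrr add0r. Qed.
Lemma zid4 (V : zmodType) (a b c e : V) : a + (b - e) = c -> c - (a + b) = - e.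
Proof. by move=> <-; rewrite opprD addrA (addrAC _ (- a)) (addrAC _ (- b)) (addrAC a) subrr add0r (addrAC b) subrr add0r. Qed.
Lemma zid5 (V : zmodType) (P Q W b : V) : -(W - Q) = P - b -> P - Q + W = b.
Proof.
move=> h; have h' : W - Q = b - P by rewrite -[W - Q]opprK h opprB.
by rewrite (addrAC P) -addrA h' addrC subrK.
Qed.
Lemma zid6 (V : zmodType) (a b c d : V) : (a - b) - (c - d) = (a - c) - (b - d).
Proof. by rewrite !opprB !addrA (addrAC (a - b) d) (addrAC a (-b)) [RHS](addrAC (a - c) d). Qed.

Lemma sq0_eq (R : realType) (E : normedModType R) (x y : E) :
  `|x - y| ^+ 2 <= 0 -> x = y.
Proof.
move=> h; apply/eqP; rewrite -subr_eq0 -normr_eq0 -sqrf_eq0 eq_le h sqr_ge0 //.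
Qed.

Section BL.
Variable (R : realType).
Lemma bl_add (U V : normedModType R) (f g : U -> V) :
  bounded_linear f -> bounded_linear g -> bounded_linear (fun x => f x + g x).
Proof.
move=> /[dup] hf [lf _] /[dup] hg [lg _].
have [Cf [Cf0 hCf]] := bl_bound hf; have [Cg [Cg0 hCg]] := bl_bound hg.
split.
  by move=> a x y; rewrite lf lg scalerDr addrACA.
exists (Cf + Cg) => x; rewrite mulrDl.
exact: le_trans (ler_normD _ _) (lerD (hCf x) (hCg x)).
Qed.
Lemma bl_scale (U : normedModType R) (e : R) : bounded_linear (fun x : U => e *: x).
Proof.
split; first by move=> a x y; rewrite scalerDr !scalerA mulrC.
by exists `|e| => x; rewrite normrZ.
Qed.
Lemma bl_opp (U V : normedModType R) (f : U -> V) :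
  bounded_linear f -> bounded_linear (fun x => - f x).
Proof.
move=> [lf [C hC]]; split; first by move=> a x y; rewrite lf opprD scalerN.
by exists C => x; rewrite normrN.
Qed.
Lemma bl_comp (U V W : normedModType R) (f : V -> W) (g : U -> V) :
  bounded_linear f -> bounded_linear g -> bounded_linear (fun x => f (g x)).
Proof.
move=> /[dup] hf [lf _] /[dup] hg [lg _].
have [Cf [Cf0 hCf]] := bl_bound hf; have [Cg [Cg0 hCg]] := bl_bound hg.
split; first by move=> a x y; rewrite lg lf.
exists (Cf * Cg) => x; rewrite -mulrA.
exact: le_trans (hCf _) (ler_wpM2l Cf0 (hCg x)).
Qed.

Lemma lin_pair (U1 U2 V : normedModType R) (f : U1 -> V) (g : U2 -> V)
  (lf : forall a x y, f (a *: x + y) = a *: f x + f y)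
  (lg : forall a x y, g (a *: x + y) = a *: g x + g y) a x x' y y' :
  f (a *: x + x') + g (a *: y + y') = a *: (f x + g y) + (f x' + g y').
Proof. by rewrite lf lg scalerDr addrACA. Qed.
End BL.

Lemma coer_inv (R : realType) (E : completeNormedModType R) (ip : E -> E -> R)
  (hip : is_inner_product ip) (A : E -> E) (hA : bounded_linear A) (c : R)
  (c0 : 0 < c) (hco : forall x, c * `|x| ^+ 2 <= ip (A x) x) :
  exists B : E -> E, bounded_linear B /\ forall b, A (B b) = b.
Proof.
have [C0 [C0ge hC0]] := bl_bound hA.
exact: (coer_inverse hip hA.1 C0ge hC0 c0 hco).
Qed.

Lemma coer_inj2 (R : realType) (E : normedModType R) (ip : E -> E -> R)
  (hip : is_inner_product ip) (A : E -> E)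
  (lA : forall a x y, A (a *: x + y) = a *: A x + A y) (c : R)
  (c0 : 0 < c) (hco : forall x, c * `|x| ^+ 2 <= ip (A x) x) x y :
  A x = A y -> x = y.
Proof.
move=> e; apply/eqP; rewrite -subr_eq0 -normr_eq0; apply/eqP.
have := hco (x - y); rewrite (linB lA) e subrr (ip0l hip).
move=> h; have s0 := sqr_ge0 `|x - y|.
have h2 : `|x - y| ^+ 2 <= 0 by rewrite -(pmulr_rle0 _ c0).
apply/eqP; rewrite -sqrf_eq0 eq_le h2 s0 //.
Qed.

Theorem mainTheorem2 (R : realType)
  (H1 H2 : completeNormedModType R)
  (ip1 : H1 -> H1 -> R) (ip2 : H2 -> H2 -> R)
  (hip1 : is_inner_product ip1) (hip2 : is_inner_product ip2)
  (M11 : H1 -> H1) (M12 : H2 -> H1) (M21 : H1 -> H2) (M22 : H2 -> H2)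
  (hM11 : bounded_linear M11) (hM12 : bounded_linear M12)
  (hM21 : bounded_linear M21) (hM22 : bounded_linear M22)
  (adj11 : forall x x' : H1, ip1 (M11 x) x' = ip1 x (M11 x'))
  (adj22 : forall y y' : H2, ip2 (M22 y) y' = ip2 y (M22 y'))
  (adj12 : forall (y : H2) (x : H1), ip1 (M12 y) x = ip2 y (M21 x))
  (pos11 : forall x : H1, 0 <= ip1 (M11 x) x)
  (neg22 : forall y : H2, ip2 (M22 y) y <= 0) :
  forall eps : R, 0 < eps ->
    exists Ninv : H1 * H2 -> H1 * H2,
      [/\ bounded_linear_prod Ninv,
          (forall p, Ninv (blockop (fun x => M11 x + eps *: x) M12 M21
                                   (fun y => M22 y - eps *: y) p) = p),
          (forall p, blockop (fun x => M11 x + eps *: x) M12 M21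
                             (fun y => M22 y - eps *: y) (Ninv p) = p)
        & (forall p, pnorm (Ninv (blockop M11 M12 M21 M22 p)) <= pnorm p)].
Proof.
move=> eps e0.
have l11 := hM11.1; have l12 := hM12.1; have l21 := hM21.1; have l22 := hM22.1.
have cross x y : ip1 (M12 y) x = ip2 (M21 x) y by rewrite adj12 (ipC hip2).
have energy x y : 0 <= ip1 (M11 x + M12 y) x - ip2 (M21 x + M22 y) y.
  rewrite (ipDl hip1) (ipDl hip2) cross.
  have := pos11 x; have := neg22 y; lra.
have energy_eps x y : eps * (`|x| ^+ 2 + `|y| ^+ 2) <=
    ip1 (M11 x + eps *: x + M12 y) x - ip2 (M21 x + (M22 y - eps *: y)) y.
  rewrite !(ipDl hip1) !(ipDl hip2) (ipNl hip2) (ipZl hip1) (ipZl hip2) cross.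
  rewrite (ipxx hip1) (ipxx hip2).
  have := pos11 x; have := neg22 y; lra.
pose A1 := fun x => M11 x + eps *: x.
have bA1 : bounded_linear A1 := bl_add hM11 (bl_scale _ eps).
have cA1 x : eps * `|x| ^+ 2 <= ip1 (A1 x) x.
  rewrite /A1 (ipDl hip1) (ipZl hip1) (ipxx hip1).
  have := pos11 x; lra.
have [K [bK AK]] := coer_inv hip1 bA1 e0 cA1.
have lK := bK.1.
(* Schur complement *)
pose A2 := fun y => - (M22 y - eps *: y - M21 (K (M12 y))).
have bA2 : bounded_linear A2.
  apply: bl_opp; apply: bl_add; first exact: (bl_add hM22 (bl_opp (bl_scale _ eps))).
  apply: bl_opp; apply: bl_comp => //; exact: bl_comp.
have cA2 y : eps * `|y| ^+ 2 <= ip2 (A2 y) y.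
  rewrite /A2 (ipNl hip2) !(ipBl hip2) (ipZl hip2) (ipxx hip2).
  have h : 0 <= ip2 (M21 (K (M12 y))) y.
    rewrite -cross -{1}(AK (M12 y)).
    have := cA1 (K (M12 y)); have := sqr_ge0 `|K (M12 y)|; nra.
  have := neg22 y; lra.
have [G [bG AG]] := coer_inv hip2 bA2 e0 cA2.
pose Meps := blockop (fun x => M11 x + eps *: x) M12 M21 (fun y => M22 y - eps *: y).
pose Ninv := fun p : H1 * H2 =>
  let y := G (M21 (K p.1) - p.2) in (K (p.1 - M12 y), y).
have right p : Meps (Ninv p) = p.
  case: p => a b; rewrite /Meps /Ninv /blockop /=.
  set y := G _.
  congr (_, _).
    by have := AK (a - M12 y); rewrite /A1 => ->; rewrite subrK.
  have hy := AG (M21 (K a) - b); rewrite -/y /A2 in hy.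
  rewrite (linB lK) (linB l21).
  exact: zid5 hy.
have lD : forall a x y, (fun y => M22 y - eps *: y) (a *: x + y) =
    a *: (fun y => M22 y - eps *: y) x + (fun y => M22 y - eps *: y) y.
  exact: (bl_add hM22 (bl_opp (bl_scale _ eps))).1.
have lMeps a (u v : H1 * H2) : Meps (a *: u.1 + v.1, a *: u.2 + v.2) =
    (a *: (Meps u).1 + (Meps v).1, a *: (Meps u).2 + (Meps v).2).
  rewrite /Meps /blockop /=; congr (_, _).
    exact: (lin_pair bA1.1 l12 a u.1 v.1 u.2 v.2).
  exact: (lin_pair l21 lD a u.1 v.1 u.2 v.2).
have inj p q : Meps p = Meps q -> p = q.
  case: p q => [x y] [x' y']; rewrite /Meps /blockop /= => -[e1 e2].
  have d1 : M11 (x - x') + eps *: (x - x') + M12 (y - y') = 0.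
    by rewrite (linB l11) (linB l12) scalerBr zid3 zid3 e1 subrr.
  have d2 : M21 (x - x') + (M22 (y - y') - eps *: (y - y')) = 0.
    by rewrite (linB l21) (linB l22) scalerBr zid6 zid3 e2 subrr.
  have := energy_eps (x - x') (y - y'); rewrite d1 d2 (ip0l hip1) (ip0l hip2) subrr.
  move=> h; have s1 := sqr_ge0 `|x - x'|; have s2 := sqr_ge0 `|y - y'|.
  have h2 : `|x - x'| ^+ 2 + `|y - y'| ^+ 2 <= 0 by rewrite -(pmulr_rle0 _ e0).
  have ex : x = x' by apply: sq0_eq; clear -h2 s1 s2; lra.
  have ey : y = y' by apply: sq0_eq; clear -h2 s1 s2; lra.
  by rewrite ex ey.
have bnd p : eps * pnorm (Ninv p) <= pnorm p.
  set q := Ninv p; have hq := right p; rewrite -/q in hq.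
  have e1 : (Meps q).1 = p.1 by rewrite hq.
  have e2 : (Meps q).2 = p.2 by rewrite hq.
  rewrite /Meps /blockop /= in e1 e2.
  have en := energy_eps q.1 q.2; rewrite e1 e2 in en.
  have y1 := young hip1 p.1 q.1 eps.
  have y2 := young hip2 (- p.2) q.2 eps; rewrite (ipNl hip2) normrN in y2.
  have en2 := ler_wpM2l (ltW (mulr_gt0 (ltr0Sn _ 1) e0)) en.
  rewrite /pnorm -[eps]gtr0_norm // -sqrtr_sqr -sqrtrM ?sqr_ge0 //.
  rewrite ler_sqrt ?addr_ge0 ?sqr_ge0 //.
  clear -en2 y1 y2 e0; lra.
exists Ninv; split.
- split.
    move=> a u v; apply: inj; rewrite right lMeps !right //.
  exists eps^-1 => p.
  by rewrite -(ler_pM2l e0) mulrA mulfV ?gt_eqF // mul1r; exact: bnd.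
- by move=> p; apply: inj; rewrite right.
- exact: right.
move=> p.
set q := Ninv (blockop M11 M12 M21 M22 p).
have hq := right (blockop M11 M12 M21 M22 p); rewrite -/q in hq.
have e1 : (Meps q).1 = (blockop M11 M12 M21 M22 p).1 by rewrite hq.
have e2 : (Meps q).2 = (blockop M11 M12 M21 M22 p).2 by rewrite hq.
rewrite /Meps /blockop /= in e1 e2.
have d1 := zid2 e1; have d2 := zid4 e2.
have en := energy (p.1 - q.1) (p.2 - q.2).
rewrite (linB l11) (linB l12) (linB l21) (linB l22) !zid3 d1 d2 in en.
rewrite (ipZl hip1) (ipNl hip2) (ipZl hip2) (ipBr hip1) (ipBr hip2) (ipxx hip1) (ipxx hip2) in en.
have f1 := ip_expand hip1 p.1 q.1 1; rewrite scale1r in f1.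
have f2 := ip_expand hip2 p.2 q.2 1; rewrite scale1r in f2.
have s1 := sqr_ge0 `|p.1 - q.1|; have s2 := sqr_ge0 `|p.2 - q.2|.
have X0 : 0 <= ip1 q.1 p.1 - `|q.1| ^+ 2 + (ip2 q.2 p.2 - `|q.2| ^+ 2).
  rewrite -(pmulr_rge0 _ e0) mulrDr; clear -en; lra.
rewrite /pnorm ler_sqrt ?addr_ge0 ?sqr_ge0 //.
clear -X0 f1 f2 s1 s2; lra.
Qed.
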